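(* Let $\boldsymbol{\tau} \colon \mathsf{BPT} \to \mathbb K$ be a weighted troupe. For $n \geq 1$, let \[\omega_n = \sum_{T \in \mathsf{Branch}_n} \boldsymbol{\tau}(T)\quad\text{and}\quad\check{\omega}_n = \sum_{T \in \mathsf{BPT}_n} \boldsymbol{\tau}(T).\] Then, the generating functions \[\mathscr{B}(t) = \sum_{n \geq 1} \omega_n t^n\quad\text{and}\quad \mathscr T(t) = \sum_{n \geq 1} \check{\omega}_n t^n\] satisfy \[\mathscr T(t) = \mathscr B\left(\frac{t}{1 - t\mathscr T(t)}\right).\]
   Context: $\mathbb K$ is a commutative ring. $\mathsf{BPT}$ is the set of binary plane trees (rooted trees where each child is designated left or right, each vertex having at most one left and one right child), including the empty tree $\varnothing$; $\mathsf{BPT}_n$ is the set of those with $n$ vertices. A branch is a nonempty binary plane tree in which every vertex has at most one child; $\mathsf{Branch}_n$ is the set of branches with $n$ vertices. For nonempty binary plane trees $T_1,T_2$ and a vertex $v$ of $T_1$, the insertion $\nabla_v(T_1,T_2)$ is obtained by extending $v$ into a left edge (identifying $v$ with the bottom vertex and calling the new upper vertex $v^*$) and attaching $T_2$ as the right subtree of $v^*$. A weighted troupe is a function $\boldsymbol{\tau}\colon\mathsf{BPT}\to\mathbb K$ with $\boldsymbol{\tau}(\varnothing)=0$ and $\boldsymbol{\tau}(\nabla_v(T_1,T_2))=\boldsymbol{\tau}(T_1)\boldsymbol{\tau}(T_2)$ for all $T_1,T_2$ and all vertices $v\in T_1$ (here with a single color, i.e. trees are uncolored). *)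

(* Defs.v *)
From mathcomp Require Import all_boot all_algebra.
Set Implicit Arguments. Unset Strict Implicit. Unset Printing Implicit Defensive.
Import GRing.Theory.
Local Open Scope ring_scope.

(* bLeaf is the empty tree; bNode l r is a root with left subtree l and
   right subtree r (an empty subtree means "no child on that side"). *)
Inductive bpt : Type := bLeaf | bNode of bpt & bpt.

Fixpoint bsize (T : bpt) : nat :=
  match T with bLeaf => 0%N | bNode l r => (bsize l + bsize r).+1 end.

Definition nonempty (T : bpt) : bool := if T is bNode _ _ then true else false.

Fixpoint allowed_branch (T : bpt) : bool :=
  match T with
  | bLeaf => true
  | bNode l r => ~~ (nonempty l && nonempty r) && allowed_branch l && allowed_branch r
  end.
Definition is_branch (T : bpt) : bool := nonempty T && allowed_branch T.

(* Vertices of T are addressed by paths from the root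
   (false = go to left child, true = go to right child). *)
Fixpoint subtree_at (T : bpt) (p : seq bool) : bpt :=
  match p, T with
  | [::], _ => T
  | b :: p', bNode l r => subtree_at (if b then r else l) p'
  | _ :: _, bLeaf => bLeaf
  end.
Definition is_vertex (T : bpt) (p : seq bool) : bool := nonempty (subtree_at T p).

(* insertion nabla_v(T1,T2): the vertex v (at path p) is extended into a left
   edge; the new upper vertex v* takes the place of v, v (with its subtrees)
   becomes the left child of v*, and T2 is the right subtree of v*. *)
Fixpoint insertion (T1 : bpt) (p : seq bool) (T2 : bpt) : bpt :=
  match p, T1 with
  | [::], U => bNode U T2
  | b :: p', bNode l r =>
      if b then bNode l (insertion r p' T2) else bNode (insertion l p' T2) r
  | _ :: _, bLeaf => bLeaf
  end.

Definition weighted_troupe (K : comPzRingType) (tau : bpt -> K) : Prop :=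
  tau bLeaf = 0 /\
  forall T1 T2 p, nonempty T1 -> nonempty T2 -> is_vertex T1 p ->
    tau (insertion T1 p T2) = tau T1 * tau T2.

Fixpoint trees_upto (h : nat) : seq bpt :=
  match h with
  | 0 => [:: bLeaf]
  | h'.+1 => bLeaf :: [seq bNode l r | l <- trees_upto h', r <- trees_upto h']
  end.

(* BPT_n and Branch_n (a tree with n vertices has height <= n) *)
Definition BPT_n (n : nat) : seq bpt := [seq T <- trees_upto n | bsize T == n].
Definition Branch_n (n : nat) : seq bpt := [seq T <- BPT_n n | is_branch T].

Definition fps (K : comPzRingType) := nat -> K.

Section FPS.
Variable K : comPzRingType.
Definition fps_one : fps K := fun n => (n == 0%N)%:R.
Definition fps_X : fps K := fun n => (n == 1%N)%:R.
Definition fps_sub (f g : fps K) : fps K := fun n => f n - g n.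
Definition fps_mul (f g : fps K) : fps K :=
  fun n => \sum_(i < n.+1) f i * g (n - i)%N.
Fixpoint fps_pow (f : fps K) (k : nat) : fps K :=
  match k with 0 => fps_one | k'.+1 => fps_mul f (fps_pow f k') end.
(* multiplicative inverse of f when f 0 = 1: 1/f = sum_j (1 - f)^j,
   a well-defined (coefficientwise finite) sum since (1 - f) has zero
   constant term *)
Definition fps_inv1 (f : fps K) : fps K :=
  fun n => \sum_(j < n.+1) fps_pow (fps_sub fps_one f) j n.
(* composition f(g), for g with zero constant term *)
Definition fps_comp (f g : fps K) : fps K :=
  fun n => \sum_(k < n.+1) f k * fps_pow g k n.
End FPS.

Definition branch_series (K : comPzRingType) (tau : bpt -> K) : fps K :=
  fun n => if n == 0%N then 0 else \sum_(T <- Branch_n n) tau T.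
Definition tree_series (K : comPzRingType) (tau : bpt -> K) : fps K :=
  fun n => if n == 0%N then 0 else \sum_(T <- BPT_n n) tau T.

(* Main.v *)
Require Import Defs.
From HB Require Import structures.
From mathcomp Require Import all_boot all_algebra.
From mathcomp Require Import zify.
Set Implicit Arguments. Unset Strict Implicit. Unset Printing Implicit Defensive.
Import GRing.Theory.
Local Open Scope ring_scope.

Fixpoint bpt_eqb (a b : bpt) : bool :=
  match a, b with
  | bLeaf, bLeaf => true
  | bNode l r, bNode l' r' => bpt_eqb l l' && bpt_eqb r r'
  | _, _ => false end.
Lemma bpt_eqP : Equality.axiom bpt_eqb.
Proof.
elim=> [|l IHl r IHr] [|l' r'] /=; try by constructor.
by apply: (iffP andP) => [[/IHl -> /IHr ->]|[<- <-]] //; split; [apply/IHl|apply/IHr].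
Qed.
HB.instance Definition _ := hasDecEq.Build bpt bpt_eqP.

Fixpoint height (T : bpt) : nat :=
  match T with bLeaf => 0%N | bNode l r => (maxn (height l) (height r)).+1 end.

Lemma mem_trees_upto h T : (T \in trees_upto h) = (height T <= h)%N.
Proof.
elim: h T => [|h IH] [|l r] //=.
rewrite in_cons /=; apply/allpairsP/idP => [[[a b] /= [Ha Hb [-> ->]]]|].
  by rewrite ltnS geq_max -!IH Ha Hb.
rewrite ltnS geq_max => /andP[Hl Hr]; exists (l, r); by rewrite !IH.
Qed.

Lemma uniq_trees_upto h : uniq (trees_upto h).
Proof.
elim: h => [|h IH] //=; apply/andP; split.
  by apply/allpairsP => -[[a b] [_ _]].
apply: allpairs_uniq => // -[a b] [c d] _ _ /= [-> ->] //.
Qed.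

Lemma height_le_size T : (height T <= bsize T)%N.
Proof. elim: T => [|l IHl r IHr] //=; rewrite ltnS geq_max; apply/andP; split; lia. Qed.

Lemma BPT_perm h n : (n <= h)%N -> perm_eq (BPT_n n) [seq T <- trees_upto h | bsize T == n].
Proof.
move=> nh; apply: uniq_perm; rewrite ?filter_uniq ?uniq_trees_upto // => T.
rewrite !mem_filter !mem_trees_upto; case: eqP => //= Hn.
by rewrite -Hn height_le_size (leq_trans (height_le_size T)) // Hn.
Qed.

Lemma mem_BPT n T : (T \in BPT_n n) = (bsize T == n).
Proof. by rewrite mem_filter mem_trees_upto andb_idr // => /eqP <-; apply: height_le_size. Qed.

Lemma uniq_BPT n : uniq (BPT_n n).
Proof. by rewrite filter_uniq ?uniq_trees_upto. Qed.

Lemma mem_Branch k T : (T \in Branch_n k) = (bsize T == k) && is_branch T.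
Proof. by rewrite mem_filter mem_BPT andbC. Qed.

Lemma uniq_Branch k : uniq (Branch_n k).
Proof. by rewrite filter_uniq ?uniq_BPT. Qed.

Section Sums.
Variable K : comPzRingType.

Lemma sum_BPT_S (F : bpt -> K) m :
  \sum_(T <- BPT_n m.+1) F T =
  \sum_(i < m.+1) \sum_(l <- BPT_n i) \sum_(r <- BPT_n (m - i)) F (bNode l r).
Proof.
rewrite (perm_big _ (BPT_perm (leqnn m.+1))) /= big_filter /=.
rewrite big_mkcond /= big_allpairs_dep /=.
set U := trees_upto m.
transitivity (\sum_(i < m.+1) \sum_(l <- U) \sum_(r <- U)
    (if (bsize l == i) && (bsize r == m - i)%N then F (bNode l r) else 0)); last first.
  apply: congr_big => // i _.
  rewrite (perm_big _ (BPT_perm (ltnSE (ltn_ord i)))) big_filter [RHS]big_mkcond /= -/U.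
  apply: eq_bigr => l _.
  rewrite (perm_big _ (BPT_perm (leq_subr i m))) big_filter /= -/U.
  case: eqP => _ /=; last by rewrite big1.
  by rewrite [RHS]big_mkcond.
rewrite [RHS]exchange_big /=; apply: eq_bigr => l _.
rewrite [RHS]exchange_big /=; apply: eq_bigr => r _.
rewrite -big_mkcond /=.
rewrite (eq_bigl (fun i : 'I_m.+1 => (bsize r == m - i)%N && (i == bsize l :> nat))); last first.
  by move=> i /=; rewrite andbC [X in _ && X]eq_sym.
rewrite (big_ord1_cond_eq _ (fun _ => F (bNode l r)) (fun i => bsize r == (m - i)%N)).
congr (if _ then _ else _).
apply/eqP/andP => [[H]|[H1 /eqP H2]]; [split; [|apply/eqP]|]; lia.
Qed.
End Sums.

From Stdlib Require Import FunctionalExtensionality.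

Section FPSAlg.
Variable K : comPzRingType.
Implicit Types f g h : fps K.
Definition fps_add f g : fps K := fun n => f n + g n.

Lemma fps_mulC f g : fps_mul f g = fps_mul g f.
Proof.
apply: functional_extensionality => n; rewrite /fps_mul.
rewrite (reindex_inj rev_ord_inj) /=; apply: eq_bigr => i _.
rewrite subSS subKn; first by rewrite mulrC.
exact: (ltnSE (ltn_ord i)).
Qed.

Lemma fps_mulDl f g h : fps_mul (fps_add f g) h = fps_add (fps_mul f h) (fps_mul g h).
Proof.
apply: functional_extensionality => n; rewrite /fps_mul /fps_add -big_split /=.
by apply: eq_bigr => i _; rewrite mulrDl.
Qed.

Lemma fps_mul1l f : fps_mul (@fps_one K) f = f.
Proof.
apply: functional_extensionality => n; rewrite /fps_mul big_ord_recl /= mul1r subn0.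
by rewrite big1 ?addr0 // => i _; rewrite /fps_one /= mul0r.
Qed.

Lemma fps_mulX f n : fps_mul (@fps_X K) f n = if n is n'.+1 then f n' else 0.
Proof.
rewrite /fps_mul; case: n => [|n]; first by rewrite big_ord_recl big_ord0 /fps_X /= mul0r addr0.
rewrite big_ord_recl /fps_X /= mul0r add0r big_ord_recl /= mul1r subSS subn0.
by rewrite big1 ?addr0 // => i _; rewrite mul0r.
Qed.

Lemma tri_sum (F : nat -> K) n i : (i <= n)%N ->
  \sum_(j < (n - i).+1) F j = \sum_(j < n.+1 | (i + j <= n)%N) F j.
Proof.
move=> Hi; rewrite (big_ord_widen _ F (_ : (n - i).+1 <= n.+1)%N); last by lia.
by apply: eq_bigl => j; apply/idP/idP; lia.
Qed.

Lemma fps_mulA f g h : fps_mul f (fps_mul g h) = fps_mul (fps_mul f g) h.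
Proof.
apply: functional_extensionality => n; rewrite /fps_mul.
transitivity (\sum_(i < n.+1) \sum_(j < (n - i).+1) f i * (g j * h (n - i - j)%N)).
  by apply: eq_bigr => i _; rewrite mulr_sumr.
symmetry.
transitivity (\sum_(a < n.+1) \sum_(i < n.+1 | (i <= a)%N) f i * g (a - i)%N * h (n - a)%N).
  apply: eq_bigr => a _; rewrite mulr_suml.
  rewrite (big_ord_widen _ (fun i => f i * g (a - i)%N * h (n - a)%N) (ltn_ord a)).
  by [].
rewrite (exchange_big_dep predT) //=; apply: eq_bigr => i _.
rewrite (eq_bigl (fun a : 'I_n.+1 => predT a && (i <= a)%N)) //.
rewrite -(big_geq_mkord i n.+1 predT (fun a => f i * g (a - i)%N * h (n - a)%N)).
rewrite -{1}(add0n i) big_addn big_mkord.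
have Hi : (i <= n)%N := ltnSE (ltn_ord i).
rewrite (_ : (n.+1 - i = (n - i).+1)%N); last by lia.
apply: eq_bigr => j _; rewrite addnK -mulrA; congr (_ * (_ * h _)); lia.
Qed.
End FPSAlg.

Section FPSInv.
Variable K : comPzRingType.
Implicit Types f g h u : fps K.

Lemma pow_low u : u 0%N = 0 -> forall j n, (n < j)%N -> fps_pow u j n = 0.
Proof.
move=> u0; elim=> [|j IH] n //= Hn; rewrite /fps_mul big1 // => i _.
case: i => [[|i'] Hi] /=; first by rewrite u0 mul0r.
by rewrite IH ?mulr0 //; lia.
Qed.

Lemma inv_id u : u 0%N = 0 ->
  fps_inv1 (fps_sub (@fps_one K) u) = fps_add (@fps_one K) (fps_mul u (fps_inv1 (fps_sub (@fps_one K) u))).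
Proof.
move=> u0.
have E : fps_sub (@fps_one K) (fps_sub (@fps_one K) u) = u.
  by apply: functional_extensionality => n; rewrite /fps_sub opprB addrC subrK.
apply: functional_extensionality => n; rewrite /fps_inv1 E /fps_add.
transitivity (fps_pow u 0 n + \sum_(j < n.+1) fps_pow u j.+1 n); last first.
  congr (_ + _); rewrite /fps_mul.
  transitivity (\sum_(j < n.+1) \sum_(i < n.+1) u i * fps_pow u j (n - i)%N).
    by apply: eq_bigr => j _.
  rewrite exchange_big /=; apply: eq_bigr => i _; rewrite mulr_sumr.
  rewrite (big_ord_widen _ (fun j => u i * fps_pow u j (n - i)%N) (_ : (n - i).+1 <= n.+1)%N); last by lia.
  rewrite [RHS]big_mkcond; apply: eq_bigr => j _; case: ifP => // Hj.
  by rewrite pow_low ?mulr0 //; lia.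
rewrite big_ord_recl [in RHS]big_ord_recr /=.
by rewrite (_ : fps_mul u (fps_pow u n) n = 0) ?addr0 //; exact: (pow_low u0 (ltnSn n)).
Qed.
End FPSInv.

Section FPSSol.
Variable K : comPzRingType.
Implicit Types f g h u : fps K.

Lemma fps_addC f g : fps_add f g = fps_add g f.
Proof. by apply: functional_extensionality => n; rewrite /fps_add addrC. Qed.

Lemma uniq_sol (T g f1 f2 : fps K) :
  f1 = fps_mul (@fps_X K) (fps_add (fps_mul f1 T) g) ->
  f2 = fps_mul (@fps_X K) (fps_add (fps_mul f2 T) g) -> f1 = f2.
Proof.
move=> E1 E2; apply: functional_extensionality => k.
suff H : forall n k, (k <= n)%N -> f1 k = f2 k by exact: (H k k (leqnn k)).
elim=> [|n IH] [|k'] Hk //; rewrite E1 E2 !fps_mulX //.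
rewrite /fps_add /fps_mul; congr (_ + _); apply: eq_bigr => i _.
by rewrite IH //; have := ltn_ord i; lia.
Qed.

Definition Sser (T : fps K) : fps K :=
  fps_mul (@fps_X K) (fps_inv1 (fps_sub (@fps_one K) (fps_mul (@fps_X K) T))).

Lemma Sser_sol (T g : fps K) :
  fps_mul (Sser T) g = fps_mul (@fps_X K) (fps_add (fps_mul (fps_mul (Sser T) g) T) g).
Proof.
rewrite /Sser; set u := fps_mul (@fps_X K) T; set I := fps_inv1 _.
have u0 : u 0%N = 0 by rewrite /u fps_mulX.
have EI : I = fps_add (@fps_one K) (fps_mul u I) by exact: inv_id.
rewrite -!fps_mulA; congr (fps_mul _ _).
rewrite [in LHS]EI fps_mulDl fps_mul1l fps_addC; congr (fps_add _ _).
rewrite -[LHS]fps_mulA /u -[LHS]fps_mulA (fps_mulC T (fps_mul I g)).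
by rewrite (fps_mulA I g T).
Qed.
End FPSSol.

Fixpoint sp (T : bpt) : bpt :=
  match T with
  | bLeaf => bLeaf
  | bNode l r => if nonempty l && nonempty r then sp l else bNode (sp l) (sp r)
  end.

Fixpoint plug (d : seq bool) (X : bpt) : bpt :=
  match d with
  | [::] => X
  | b :: d' => if b then bNode bLeaf (plug d' X) else bNode (plug d' X) bLeaf
  end.

Lemma plug_rcons d b X :
  plug (rcons d b) X = plug d (if b then bNode bLeaf X else bNode X bLeaf).
Proof. by elim: d => [|c d IH] //=; rewrite IH. Qed.

Lemma insertion_plug d l r : insertion (plug d l) d r = plug d (bNode l r).
Proof. elim: d => [|b d IH]; first by case: l. by case: b; rewrite /= IH. Qed.

Lemma subtree_plug d X : subtree_at (plug d X) d = X.
Proof. elim: d => [|b d IH]; first by case: X. by case: b. Qed.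

Lemma plug_nonempty d X : nonempty X -> nonempty (plug d X).
Proof. by case: d => [|b d] //; case: b. Qed.

Lemma sp_nonempty T : nonempty (sp T) = nonempty T.
Proof. by elim: T => [|l IHl r IHr] //=; case: ifP => // /andP[Hl _]; rewrite IHl. Qed.

Lemma sp_allowed T : allowed_branch (sp T).
Proof.
elim: T => [|l IHl r IHr] //=; case: ifP => // /negbT H /=.
by rewrite !sp_nonempty H IHl IHr.
Qed.

Lemma sp_size T : (bsize (sp T) <= bsize T)%N.
Proof. elim: T => [|l IHl r IHr] //=; case: ifP => _ /=; lia. Qed.

Section Troupe.
Variable K : comPzRingType.
Variable tau : bpt -> K.
Hypothesis Htau : weighted_troupe tau.

Fixpoint pw (T : bpt) : K :=
  match T with
  | bLeaf => 1
  | bNode l r => if nonempty l && nonempty r then pw l * tau r else pw l * pw r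
  end.

Lemma tau_sp T d : nonempty T -> tau (plug d T) = tau (plug d (sp T)) * pw T.
Proof.
elim: T d => [|l IHl r IHr] d // _.
case Hl: (nonempty l); case Hr: (nonempty r).
- rewrite -insertion_plug (proj2 Htau) ?plug_nonempty ?/is_vertex ?subtree_plug //.
  by rewrite IHl // /= Hl Hr /= mulrA.
- have -> : r = bLeaf by destruct r.
  by rewrite /= Hl /= mulr1 -(plug_rcons d false) IHl // plug_rcons.
- have -> : l = bLeaf by destruct l.
  by rewrite /= mul1r -(plug_rcons d true) IHr // plug_rcons.
- have -> : r = bLeaf by destruct r.
  have -> : l = bLeaf by destruct l.
  by rewrite /= !mulr1.
Qed.
End Troupe.

Lemma BPT0 : BPT_n 0 = [:: bLeaf].
Proof. by []. Qed.

Lemma ne_size T : nonempty T = (bsize T != 0%N).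
Proof. by case: T. Qed.

Lemma ne_BPT T n : T \in BPT_n n -> nonempty T = (n != 0%N).
Proof. by rewrite mem_BPT ne_size => /eqP ->. Qed.

Lemma eq_leaf T : (T == bLeaf) = ~~ nonempty T.
Proof. by case: T. Qed.

Lemma sp_leaf T : (sp T == bLeaf) = (T == bLeaf).
Proof. by rewrite !eq_leaf sp_nonempty. Qed.

Lemma eq_bNode a b c d : (bNode a b == bNode c d) = (a == c) && (b == d).
Proof. by []. Qed.

Section Cser.
Variable K : comPzRingType.
Variable tau : bpt -> K.

Definition cser (B : bpt) : fps K :=
  fun n => \sum_(T <- BPT_n n | sp T == B) pw tau T.

Lemma c_leaf : cser bLeaf = @fps_one K.
Proof.
apply: functional_extensionality => -[|n].
  by rewrite /cser BPT0 big_cons big_nil /= addr0.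
rewrite /cser /fps_one /= big1_seq // => T /andP[H1 H2].
by move: H1; rewrite sp_leaf eq_leaf (ne_BPT H2).
Qed.

Lemma c0 B : nonempty B -> cser B 0 = 0.
Proof. by case: B => // l r _; rewrite /cser BPT0 big_cons big_nil. Qed.

Lemma sumLeaf (X : bpt -> K) j :
  \sum_(r <- BPT_n j) (if r == bLeaf then X r else 0) = if j == 0%N then X bLeaf else 0.
Proof.
case: j => [|j]; first by rewrite BPT0 big_cons big_nil /= addr0.
by rewrite big1_seq // => r /andP[_ Hr]; rewrite eq_leaf (ne_BPT Hr).
Qed.

Lemma c_rec Bl Br : allowed_branch (bNode Bl Br) ->
  cser (bNode Bl Br) = fps_mul (@fps_X K)
    (fps_add (fps_mul (cser (bNode Bl Br)) (tree_series tau))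
             (cser (if nonempty Br then Br else Bl))).
Proof.
move=> HB; set B := bNode Bl Br.
apply: functional_extensionality => n; rewrite fps_mulX.
case: n => [|m]; first exact: c0.
rewrite /cser big_mkcond sum_BPT_S /fps_add /fps_mul.
transitivity (
  \sum_(i < m.+1) \sum_(l <- BPT_n i) \sum_(r <- BPT_n (m - i))
     (if nonempty l && nonempty r then (if sp l == B then pw tau l * tau r else 0) else 0)
 + \sum_(i < m.+1) \sum_(l <- BPT_n i) \sum_(r <- BPT_n (m - i))
     (if nonempty l && nonempty r then 0 else
        (if (sp l == Bl) && (sp r == Br) then pw tau l * pw tau r else 0))).
  rewrite -big_split; apply: eq_bigr => i _.
  rewrite -big_split; apply: eq_bigr => l _.
  rewrite -big_split; apply: eq_bigr => r _ /=.
  case: (nonempty l && nonempty r); first by rewrite addr0.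
  by rewrite add0r eq_bNode.
congr (_ + _).
- apply: eq_bigr => i _.
  have [Hi|Hi] := eqVneq (nat_of_ord i) 0%N.
    by rewrite Hi BPT0 !big_cons !big_nil /= big1 // addr0 /B /= mul0r.
  have [Hmi|Hmi] := eqVneq (m - i)%N 0%N.
    rewrite Hmi /tree_series /= mulr0 big1 // => l _.
    by rewrite BPT0 big_cons big_nil /= andbF addr0.
  rewrite /tree_series (negbTE Hmi) mulr_suml [RHS]big_mkcond.
  apply: eq_big_seq => l Hl; rewrite (ne_BPT Hl) Hi /=.
  case: ifP => _; last by rewrite big1 // => r _; case: ifP.
  rewrite mulr_sumr; apply: eq_big_seq => r Hr.
  by rewrite (ne_BPT Hr) Hmi.
- case HBr: (nonempty Br).
  + have HBl : Bl = bLeaf.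
      by move: HB => /= /andP[/andP[H _] _]; move: H; rewrite HBr andbT; case: (Bl).
    rewrite HBl.
    transitivity (\sum_(i < m.+1) \sum_(r <- BPT_n (m - i))
        (if i == 0%N :> nat then (if sp r == Br then pw tau r else 0) else 0)).
      apply: eq_bigr => i _; rewrite exchange_big /=; apply: eq_bigr => r _.
      rewrite -(sumLeaf (fun _ => if sp r == Br then pw tau r else 0)).
      apply: eq_bigr => l _; rewrite sp_leaf.
      by case: (l) => [|l1 l2] /=; [rewrite mul1r | case: ifP].
    rewrite big_ord_recl /= subn0 [X in _ + X]big1 ?addr0; last first.
      by move=> i _; apply: big1.
    by rewrite [RHS]big_mkcond.
  + have HBr' : Br = bLeaf by move: HBr; case: (Br).
    rewrite HBr'.
    transitivity (\sum_(i < m.+1)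
        (if (m - i == 0)%N then (\sum_(l <- BPT_n i) if sp l == Bl then pw tau l else 0) else 0)).
      apply: eq_bigr => i _.
      case: ifP => Hmi.
        apply: eq_bigr => l _.
        by rewrite (eqP Hmi) BPT0 big_cons big_nil /= andbF eqxx andbT mulr1 addr0.
      apply: big1 => l _.
      rewrite (eq_bigr (fun r => if r == bLeaf then (if sp l == Bl then pw tau l else 0) else 0)).
        by rewrite sumLeaf Hmi.
      move=> r _; rewrite sp_leaf.
      by case: (r) => [|r1 r2] /=; [rewrite andbF andbT mulr1 | rewrite andbF; case: ifP].
    rewrite big_ord_recr /= subnn eqxx big1 ?add0r; last first.
      by move=> i _; rewrite (_ : (m - i == 0)%N = false) //; have := ltn_ord i; lia.
    by rewrite [RHS]big_mkcond.
Qed.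
End Cser.

Section Final.
Variable K : comPzRingType.
Variable tau : bpt -> K.

Lemma c_pow B : allowed_branch B ->
  cser tau B = fps_pow (Sser (tree_series tau)) (bsize B).
Proof.
elim: B => [|Bl IHl Br IHr] HB; first by rewrite (c_leaf tau).
have H := c_rec tau HB.
have E : cser tau (bNode Bl Br) =
   fps_mul (Sser (tree_series tau)) (cser tau (if nonempty Br then Br else Bl)).
  exact: (uniq_sol H (Sser_sol _ _)).
rewrite E; move: HB => /= /andP[/andP[HB1 HB2] HB3].
case HBr: (nonempty Br).
- have -> : Bl = bLeaf by move: HB1; rewrite HBr andbT; case: (Bl).
  by rewrite IHr.
- have -> : Br = bLeaf by move: HBr; case: (Br).
  by rewrite IHl // addn0.
Qed.

Lemma pick_branch T n (x : K) : T \in BPT_n n -> n != 0%N ->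
  \sum_(k < n.+1) \sum_(B <- Branch_n k) (if sp T == B then x else 0) = x.
Proof.
move=> HT Hn.
have HTn : nonempty T by rewrite (ne_BPT HT).
have inner : forall k, \sum_(B <- Branch_n k) (if sp T == B then x else 0)
                     = if k == bsize (sp T) then x else 0.
  move=> k; rewrite -big_mkcond /= -big_filter.
  case: eqP => Hk.
    rewrite (eq_filter (a2 := pred1 (sp T))); last by move=> B; rewrite /= eq_sym.
    rewrite (filter_pred1_uniq (uniq_Branch k)) ?big_cons ?big_nil ?addr0 //.
    by rewrite mem_Branch Hk eqxx /is_branch sp_nonempty HTn sp_allowed.
  rewrite big_filter big1_seq // => B /andP[/eqP HB HB'].
  by move: HB'; rewrite mem_Branch -HB => /andP[/eqP /esym].
under eq_bigr do rewrite inner.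
rewrite -big_mkcond /= (big_ord1_eq _ (fun _ => x)).
have := sp_size T; move: HT; rewrite mem_BPT => /eqP ->.
by rewrite ltnS => ->.
Qed.

Lemma main_eq (Htau : weighted_troupe tau) n :
  tree_series tau n =
  \sum_(k < n.+1) branch_series tau k * fps_pow (Sser (tree_series tau)) k n.
Proof.
case: n => [|m].
  by rewrite big_ord_recl big_ord0 /tree_series /branch_series /= mul0r addr0.
set n := m.+1.
have Hn : n != 0%N by [].
transitivity (\sum_(T <- BPT_n n) tau (sp T) * pw tau T).
  rewrite /tree_series /=; apply: eq_big_seq => T HT.
  have HTn : nonempty T by rewrite (ne_BPT HT).
  exact: (tau_sp Htau [::] HTn).
transitivity (\sum_(k < n.+1) \sum_(B <- Branch_n k) \sum_(T <- BPT_n n)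
                 (if sp T == B then tau (sp T) * pw tau T else 0)); last first.
  apply: eq_bigr => k _.
  have -> : branch_series tau k = \sum_(B <- Branch_n k) tau B.
    rewrite /branch_series; case: (nat_of_ord k) => [|k2] //=.
    by rewrite (_ : Branch_n 0 = [::]) // big_nil.
  rewrite mulr_suml; apply: eq_big_seq => B HB.
  move: HB; rewrite mem_Branch => /andP[/eqP Hk /andP[_ HB]].
  rewrite -Hk -c_pow // /cser mulr_sumr [RHS]big_mkcond; apply: eq_bigr => T _.
  by case: eqP => // ->.
rewrite [RHS](eq_bigr (fun k : 'I_n.+1 => \sum_(T <- BPT_n n) \sum_(B <- Branch_n k)
                 (if sp T == B then tau (sp T) * pw tau T else 0))); last first.
  by move=> k _; rewrite exchange_big.
rewrite [RHS]exchange_big /=; apply: eq_big_seq => T HT.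
by rewrite pick_branch.
Qed.
End Final.

Theorem theorem5p1 (K : comPzRingType) (tau : bpt -> K) :
  weighted_troupe tau ->
  tree_series tau =
  fps_comp (branch_series tau)
    (fps_mul (@fps_X K)
       (fps_inv1 (fps_sub (@fps_one K) (fps_mul (@fps_X K) (tree_series tau))))).
Proof.
move=> Htau; apply: functional_extensionality => n.
exact: main_eq.
Qed.
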